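(* Let $n,p$ be positive integers, $X\in\mathbb{R}^{n\times p}$, $\mathbf y\in\mathbb{R}^n$ and $\delta>0$. For any $\mathbf s\in\{0,1\}^p$, the least squares estimate $\widehat{\boldsymbol\beta}_{[\mathbf s]}=(X_{[\mathbf s]}^\top X_{[\mathbf s]})^{-1}X_{[\mathbf s]}^\top\mathbf y$ exists (i.e. $X_{[\mathbf s]}^\top X_{[\mathbf s]}$ is invertible) if and only if $L_{\mathbf s}$ is invertible, and in that case \[ X_{[\mathbf s]}\widehat{\boldsymbol\beta}_{[\mathbf s]}=X_{\mathbf s}\widetilde{\boldsymbol\beta}_{\mathbf s}. \]
   Context: For a binary vector $\mathbf s\in\{0,1\}^p$, $|\mathbf s|=\sum_j s_j$ and $X_{[\mathbf s]}$ is the $n\times|\mathbf s|$ matrix obtained from $X$ by keeping only the columns $j$ with $s_j=1$. For $\mathbf t\in[0,1]^p$, $T_{\mathbf t}=\mathrm{Diag}(t_1,\dots,t_p)$, $X_{\mathbf t}=XT_{\mathbf t}$, $L_{\mathbf t}=\frac1n[X_{\mathbf t}^\top X_{\mathbf t}+\delta(I-T_{\mathbf t}^2)]$ with $I$ the $p\times p$ identity, and $\widetilde{\boldsymbol\beta}_{\mathbf t}:=L_{\mathbf t}^{+}\left(X_{\mathbf t}^\top\mathbf y/n\right)$ with $L_{\mathbf t}^+$ the Moore–Penrose pseudo-inverse. *)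

(* Defs.v *)
From HB Require Import structures.
From mathcomp Require Import all_boot all_order all_algebra.
From mathcomp Require Import boolp classical_sets reals.
Set Implicit Arguments. Unset Strict Implicit. Unset Printing Implicit Defensive.
Import Order.TTheory GRing.Theory Num.Theory.
Local Open Scope ring_scope.

Section Defs.
Variable R : realType.

(* The four Penrose conditions (real case: transpose = adjoint). *)
Definition is_MP_inverse m k (A : 'M[R]_(m, k)) (B : 'M[R]_(k, m)) : Prop :=
  [/\ A *m B *m A = A, B *m A *m B = B,
      (A *m B)^T = A *m B & (B *m A)^T = B *m A].

(* Moore--Penrose pseudo-inverse A^+ (it exists and is unique; we pick
   the element satisfying the Penrose conditions). *)
Definition mp_pinv m k (A : 'M[R]_(m, k)) : 'M[R]_(k, m) :=
  xget 0 [set B | is_MP_inverse A B].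

Definition supp_card p (s : 'I_p -> bool) : nat := #|[pred j | s j]|.

(* X_[s]: keep the columns j with s_j = 1 (in increasing order). *)
Definition Xsub n p (X : 'M[R]_(n, p)) (s : 'I_p -> bool)
  : 'M[R]_(n, supp_card s) :=
  colsub (fun k : 'I_(supp_card s) => enum_val k) X.

Definition Tmat p (t : 'I_p -> R) : 'M[R]_p := diag_mx (\row_j t j).

Definition Xt n p (X : 'M[R]_(n, p)) (t : 'I_p -> R) : 'M[R]_(n, p) :=
  X *m Tmat t.

Definition Lt n p (X : 'M[R]_(n, p)) (delta : R) (t : 'I_p -> R) : 'M[R]_p :=
  (n%:R)^-1 *: ((Xt X t)^T *m Xt X t + delta *: (1%:M - Tmat t *m Tmat t)).

Definition beta_tilde n p (X : 'M[R]_(n, p)) (y : 'cV[R]_n) (delta : R)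
  (t : 'I_p -> R) : 'cV[R]_p :=
  mp_pinv (Lt X delta t) *m ((n%:R)^-1 *: ((Xt X t)^T *m y)).

Definition bvec p (s : 'I_p -> bool) : 'I_p -> R := fun j => (s j)%:R.

Definition beta_hat n p (X : 'M[R]_(n, p)) (y : 'cV[R]_n) (s : 'I_p -> bool)
  : 'cV[R]_(supp_card s) :=
  invmx ((Xsub X s)^T *m Xsub X s) *m (Xsub X s)^T *m y.

End Defs.

(* Main.v *)
Require Import Defs.
From HB Require Import structures.
From mathcomp Require Import all_boot all_order all_algebra.
From mathcomp Require Import boolp classical_sets reals.
Import Order.TTheory GRing.Theory Num.Theory.
Local Open Scope ring_scope.

Section Sel.
Variables (R : realType) (p : nat) (s : 'I_p -> bool).

Definition Qs : 'M[R]_(p, supp_card s) :=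
  colsub (fun k : 'I_(supp_card s) => enum_val k) (1%:M : 'M[R]_p).

Lemma Xsub_Qs n (X : 'M[R]_(n, p)) : Xsub X s = X *m Qs.
Proof. by rewrite /Xsub /Qs mulmx_colsub mulmx1. Qed.

Lemma QsTQs : Qs^T *m Qs = 1%:M.
Proof.
have -> : Qs^T = rowsub (fun k : 'I_(supp_card s) => enum_val k) (1%:M : 'M[R]_p).
  by apply/matrixP => i j; rewrite !mxE eq_sym.
rewrite /Qs -mxsub_mul mulmx1; apply/matrixP => i j; rewrite !mxE.
by rewrite (inj_eq enum_val_inj).
Qed.

Lemma QsQsT : Qs *m Qs^T = Tmat (bvec R s).
Proof.
apply/matrixP => i j; rewrite !mxE.
under eq_bigr do rewrite !mxE.
rewrite -(big_enum_val (fun x => ((i == x)%:R * (j == x)%:R : R))) /=.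
case: (eqVneq i j) => [<-|ne].
  rewrite mulr1n /bvec.
  case si: (s i).
    rewrite (bigD1 i) ?inE //= eqxx mulr1 big1 ?addr0 // => x /andP[_ /negPf].
    by rewrite eq_sym => ->; rewrite mul0r.
  rewrite big1 // => x; rewrite inE => sx.
  by case: eqP => [ix|]; [rewrite -ix si in sx|rewrite mul0r].
rewrite mulr0n big1 // => x _.
case: eqP => [<-|]; last by rewrite mul0r.
by rewrite eq_sym (negPf ne) mulr0.
Qed.
End Sel.
Section K.
Variable R : fieldType.

Lemma key (m p : nat) (Q : 'M[R]_(p,m)) (QtQ : Q^T *m Q = 1%:M) (A : 'M_m) (d : R)
  (d0 : d != 0) :
  let T := Q *m Q^T in let L := Q *m A *m Q^T + d *: (1%:M - T) in
  (A \in unitmx <-> L \in unitmx) /\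
  (A \in unitmx -> invmx L = Q *m invmx A *m Q^T + d^-1 *: (1%:M - T)).
Proof.
move=> T L.
have HLd : L = Q *m A *m Q^T + d *: (1%:M - T) by [].
have HT : T = Q *m Q^T by [].
clearbody L T.
have H1 : Q^T *m (1%:M - T) = 0.
  by rewrite mulmxBr mulmx1 HT mulmxA QtQ mul1mx subrr.
have H2 : (1%:M - T) *m Q = 0.
  by rewrite mulmxBl mul1mx HT -mulmxA QtQ mulmx1 subrr.
have H3 : (1%:M - T) *m (1%:M - T) = 1%:M - T.
  by rewrite mulmxBl mul1mx {2}HT -mulmxA H1 mulmx0 subr0.
have HL : forall B, A *m B = 1%:M ->
   L *m (Q *m B *m Q^T + d^-1 *: (1%:M - T)) = 1%:M.
  move=> B AB.
  rewrite HLd mulmxDl !mulmxDr -!scalemxAl -!scalemxAr.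
  rewrite !mulmxA -[Q *m A *m Q^T *m Q]mulmxA QtQ mulmx1 -[Q *m A *m B]mulmxA AB mulmx1.
  rewrite -[Q *m A *m Q^T *m _]mulmxA H1 mulmx0 scaler0 addr0.
  rewrite H2 !mul0mx scaler0 add0r H3 scalerA mulfV // scale1r HT.
  by rewrite addrC subrK.
split.
  split => [Au|Lu].
    by case: (HL _ (mulmxV Au)) => /mulmx1_unit[].
  have QL : Q^T *m L = A *m Q^T.
    by rewrite HLd mulmxDr -scalemxAr H1 scaler0 addr0 !mulmxA QtQ mul1mx.
  have : A *m (Q^T *m invmx L *m Q) = 1%:M.
    by rewrite !mulmxA -QL -(mulmxA _ L) mulmxV // mulmx1.
  by move/mulmx1_unit => [].
move=> Au.
have E := HL _ (mulmxV Au).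
have Lu : L \in unitmx by case: (mulmx1_unit E).
have -> : invmx L = invmx L *m (L *m (Q *m invmx A *m Q^T + d^-1 *: (1%:M - T))).
  by rewrite E mulmx1.
by rewrite mulmxA mulVmx // mul1mx.
Qed.
End K.

Lemma mp_pinv_unit (R : realType) m (A : 'M[R]_m) :
  A \in unitmx -> mp_pinv A = invmx A.
Proof.
move=> Au.
have P : is_MP_inverse A (invmx A).
  split; rewrite ?mulmxV ?mulVmx ?mul1mx ?mulmx1 ?trmx1 //.
have : is_MP_inverse A (mp_pinv A).
  by rewrite /mp_pinv; apply: (@xgetPex _ 0 [set B | is_MP_inverse A B]); exists (invmx A).
case=> H _ _ _.
set B := mp_pinv A in H *.
have -> : B = invmx A *m (A *m B *m A) *m invmx A.
  by rewrite !mulmxA mulVmx // mul1mx -mulmxA mulmxV // mulmx1.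
by rewrite H mulVmx // mul1mx.
Qed.

Theorem theorem2 (R : realType) (n p : nat) (hn : (0 < n)%N) (hp : (0 < p)%N)
  (X : 'M[R]_(n, p)) (y : 'cV[R]_n) (delta : R) (hdelta : 0 < delta)
  (s : 'I_p -> bool) :
  (((Xsub X s)^T *m Xsub X s \in unitmx) <-> (Lt X delta (bvec R s) \in unitmx))
  /\ ((Xsub X s)^T *m Xsub X s \in unitmx ->
      Xsub X s *m beta_hat X y s
      = Xt X (bvec R s) *m beta_tilde X y delta (bvec R s)).
Proof.
have QtQ := QsTQs R p s.
have QQt := QsQsT R p s.
set Q := Qs R p s in QtQ QQt.
set A := (Xsub X s)^T *m Xsub X s.
have d0 : delta != 0 by rewrite gt_eqF.
have n0 : (n%:R : R) != 0 by rewrite pnatr_eq0 -lt0n.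
have [K1 K2] := @key R _ _ Q QtQ A delta d0.
have EL : Lt X delta (bvec R s)
    = n%:R^-1 *: (Q *m A *m Q^T + delta *: (1%:M - Q *m Q^T)).
  rewrite /Lt /Xt -QQt /A Xsub_Qs -/Q !trmx_mul !trmxK.
  by rewrite !mulmxA -(mulmxA Q Q^T Q) QtQ mulmx1.
have nu : (n%:R^-1 : R) \is a GRing.unit by rewrite unitfE invr_eq0.
split.
  by rewrite EL unitmxZ.
move=> Au.
have Lu : Lt X delta (bvec R s) \in unitmx by rewrite EL unitmxZ //; apply/K1.
rewrite /beta_tilde mp_pinv_unit // EL invmxZ -?EL // (K2 Au) invrK.
rewrite /beta_hat /Xt -QQt -/A.
set M := Q *m invmx A *m Q^T + delta^-1 *: (1%:M - Q *m Q^T).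
rewrite -!scalemxAl -!scalemxAr scalerA mulfV // scale1r.
have TMT : Q *m Q^T *m M *m (Q *m Q^T) = Q *m invmx A *m Q^T.
  rewrite /M mulmxDr -scalemxAr mulmxBr mulmx1 !mulmxA -(mulmxA Q Q^T Q) QtQ mulmx1 subrr.
  by rewrite scaler0 addr0 -(mulmxA _ Q^T Q) QtQ mulmx1.
rewrite Xsub_Qs -/Q !trmx_mul !trmxK.
have -> : X *m Q *m (invmx A *m (Q^T *m X^T) *m y)
    = X *m (Q *m invmx A *m Q^T) *m X^T *m y by rewrite !mulmxA.
by rewrite -TMT !mulmxA.
Qed.
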